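(* Let $G=\{g_1,\dots,g_n\}$ be a finite group and let $S\subseteq G$ be a subset such that $gSg^{-1}=S$ for all $g\in G$, $S$ generates $G$, $S=S^{-1}$ and $1\notin S$. Put $r:=\#S$, and assume the Cayley graph $\mathscr{X}=\mathrm{Cay}(G,S)$ is not a cycle graph (i.e. $\chi(\mathscr{X})\neq 0$). Let $\ell$ be a prime and $\beta:S\to\mathbb{Z}_\ell$ a function such that: (1) $\beta(gag^{-1})=\beta(a)$ for all $g\in G$, $a\in S$; (2) the image of $\beta$ generates $\mathbb{Z}_\ell$ as a $\mathbb{Z}_\ell$-module; (3) $\beta(s^{-1})=-\beta(s)$ for all $s\in S$; (4) the image of $\beta$ lies in $\mathbb{Z}$; (5) there exist $m>0$ and $(h_1,\dots,h_m)\in S^m$ with $h_1\cdots h_m\in S$ and $\beta(h_1\cdots h_m)\not\equiv\sum_{i=1}^m\beta(h_i)\pmod{\ell}$. Let $f_{\mathscr{X},\alpha}(T)$ be the Iwasawa power series of the associated tower, namely the determinant of the $n\times n$ matrix whose $(i,j)$-entry is $r\,\delta_{ij}-\delta_S(g_ig_j^{-1})(1+T)^{\beta(g_ig_j^{-1})}$. Then \[f_{\mathscr{X},\alpha}(T)=\prod_{\chi\in\mathrm{Irr}(G)}P_\chi(T)^{\chi(1)^2}.\]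
   Context: The Cayley graph $\mathrm{Cay}(G,S)$ has vertex set $\{v_g: g\in G\}$, with an edge joining $v_{g_i}$ to $v_{g_j}$ whenever $g_ig_j^{-1}\in S$; the voltage assignment is $\alpha(e)=\beta(g_1g_2^{-1})$ for $e$ joining $v_{g_1}$ to $v_{g_2}$. Here $\delta_{ij}$ is the Kronecker delta, $\delta_S(g)=1$ if $g\in S$ and $0$ otherwise, and $(1+T)^b$ for $b\in\mathbb{Z}$ is viewed in $\mathbb{Z}_\ell[[T]]$. Fix an embedding $\bar{\mathbb{Q}}\hookrightarrow\bar{\mathbb{Q}}_\ell$ and a finite extension $\mathcal{K}$ of $\mathbb{Q}_\ell$ containing all $n$-th roots of unity, with valuation ring $\mathcal{O}$. $\mathrm{Irr}(G)$ is the set of irreducible characters $\chi:G\to\bar{\mathbb{Q}}_\ell$ (their values lie in $\mathcal{O}$). For $\chi\in\mathrm{Irr}(G)$, $Q_\chi(T):=r\chi(1)-\sum_{t\in S}(1+T)^{\beta(t)}\chi(t)$ and $P_\chi(T):=Q_\chi(T)/\chi(1)$. *)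

(* Defs.v *)
From HB Require Import structures.
From mathcomp Require Import all_boot all_order all_algebra all_fingroup all_solvable all_field all_character.
From mathcomp Require Import fraction.
Set Implicit Arguments. Unset Strict Implicit. Unset Printing Implicit Defensive.
Import Order.TTheory GRing.Theory Num.Theory.
Local Open Scope ring_scope.

Notation ratF := {fraction {poly algC}}.

(* (1+T)^b for b : int, as an element of algC(T) (1+T is invertible there). *)
Definition onePT (b : int) : ratF := (@FracField.tofrac _ (1 + 'X : {poly algC})) ^ b.

Definition cstF (c : algC) : ratF := @FracField.tofrac _ (c%:P).

Definition cay_edges (gT : finGroupType) (G : {set gT}) (S : {set gT})
  : {set {set gT}} :=
  [set E : {set gT} | [exists x in G, exists y in G,
      (E == [set x; y]) && ((x * y^-1)%g \in S)]].

Definition cay_euler_char (gT : finGroupType) (G : {set gT}) (S : {set gT}) : int :=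
  (#|G|%:Z - #|cay_edges G S|%:Z)%R.

Definition gelt (gT : finGroupType) (G : {group gT}) (i : 'I_#|G|) : gT :=
  enum_val i.

Definition iw_matrix (gT : finGroupType) (G : {group gT}) (S : {set gT})
  (beta : gT -> int) : 'M[ratF]_#|G| :=
  \matrix_(i, j)
    ((#|S|)%:R * (i == j)%:R
     - ((gelt i * (gelt j)^-1)%g \in S)%:R * onePT (beta (gelt i * (gelt j)^-1)%g)).

Definition iwasawa_f (gT : finGroupType) (G : {group gT}) (S : {set gT})
  (beta : gT -> int) : ratF := \det (@iw_matrix gT G S beta).

Definition Qchi (gT : finGroupType) (G : {group gT}) (S : {set gT})
  (beta : gT -> int) (i : Iirr G) : ratF :=
  (#|S|)%:R * cstF ('chi_i 1%g) - \sum_(t in S) onePT (beta t) * cstF ('chi_i t).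

Definition Pchi (gT : finGroupType) (G : {group gT}) (S : {set gT})
  (beta : gT -> int) (i : Iirr G) : ratF :=
  @Qchi gT G S beta i / cstF ('chi_i 1%g).

(* Main.v *)
Require Import Defs.
From HB Require Import structures.
From mathcomp Require Import all_boot all_order all_algebra all_fingroup all_solvable all_field all_character.
From mathcomp Require Import fraction.
Import Order.TTheory GRing.Theory Num.Theory.
Local Open Scope ring_scope.
Set Implicit Arguments. Unset Strict Implicit. Unset Printing Implicit Defensive.

Section LA.
Variable F : fieldType.

Lemma det_sylv n r (B : 'M[F]_(n, r)) (C : 'M[F]_(r, n)) :
  \det (1%:M + B *m C) = \det (1%:M + C *m B).
Proof.
pose K := block_mx (1%:M : 'M_n) B (- C) (1%:M : 'M_r).
have e1 : K = block_mx 1%:M 0 (- C) 1%:M *m block_mx 1%:M B 0 (1%:M + C *m B).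
  rewrite mulmx_block !mul1mx !mulmx0 !mul0mx ?addr0 ?add0r mulNmx.
  by rewrite mulmx1 mulNmx addrC addrK.
have e2 : K = block_mx (1%:M + B *m C) B 0 1%:M *m block_mx 1%:M 0 (- C) 1%:M.
  by rewrite mulmx_block !mulmx1 !mulmx0 ?mul0mx ?add0r ?addr0 mulmxN mul1mx addrK.
have := congr1 determinant e1; rewrite e2 !det_mulmx det_lblock det_ublock.
by rewrite det_ublock !det1 !mul1r !mulr1.
Qed.

Lemma idem_fact n (E : 'M[F]_n) : E *m E = E ->
  exists B : 'M_(n, \rank E), exists C : 'M_(\rank E, n),
    E = B *m C /\ C *m B = 1%:M.
Proof.
move=> EE; set r := \rank E.
pose B : 'M_(n, r) := col_ebase E *m pid_mx r.
pose C : 'M_(r, n) := pid_mx r *m row_ebase E.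
have eE : E = B *m C.
  by rewrite /B /C mulmxA -(mulmxA _ (pid_mx r)) pid_mx_id ?rank_leq_row // mulmx_ebase.
pose B' : 'M_(r, n) := pid_mx r *m invmx (col_ebase E).
pose C' : 'M_(n, r) := invmx (row_ebase E) *m pid_mx r.
have hB : B' *m B = 1%:M.
  rewrite /B /B' mulmxA -(mulmxA _ (invmx _)) mulVmx ?col_ebase_unit // mulmx1.
  by rewrite pid_mx_id ?rank_leq_row // pid_mx_1.
have hC : C *m C' = 1%:M.
  rewrite /C /C' mulmxA -(mulmxA _ (row_ebase E)) mulmxV ?row_ebase_unit // mulmx1.
  by rewrite pid_mx_id ?rank_leq_col // pid_mx_1.
exists B, C; split=> //; clearbody B C B' C'.
have := congr1 (fun X => B' *m X *m C') EE; rewrite /= {1 2}eE.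
by rewrite eE !mulmxA hB !mul1mx -!mulmxA hC !mulmx1 => ->.
Qed.

Lemma det_idem n (E : 'M[F]_n) a : E *m E = E ->
  \det (1%:M + a *: E) = (1 + a) ^+ \rank E.
Proof.
move=> /idem_fact [B [C [eE CB]]].
by rewrite {1}eE scalemxAl det_sylv -scalemxAr CB -{1}(scale1r 1%:M) -scalerDl detZ det1 mulr1.
Qed.

Lemma tr_idem n (E : 'M[F]_n) : E *m E = E -> \tr E = (\rank E)%:R.
Proof.
by move=> /idem_fact [B [C [e CB]]]; rewrite {1}e mxtrace_mulC CB mxtrace1.
Qed.

Lemma det_idems n (I : finType) (E : I -> 'M[F]_n) (lam : I -> F) :
  (forall i, E i *m E i = E i) -> (forall i j, i != j -> E i *m E j = 0) ->
  \sum_i E i = 1%:M ->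
  \det (\sum_i lam i *: E i) = \prod_i lam i ^+ \rank (E i).
Proof.
move=> idE orth sum1.
have key : forall s : seq I, uniq s ->
   \det (1%:M + \sum_(i <- s) (lam i - 1) *: E i) = \prod_(i <- s) lam i ^+ \rank (E i).
  elim=> [|j s IH] /=; first by rewrite !big_nil addr0 det1.
  case/andP=> js us; rewrite !big_cons -IH //.
  have -> : 1%:M + ((lam j - 1) *: E j + \sum_(i <- s) (lam i - 1) *: E i)
      = (1%:M + (lam j - 1) *: E j) *m (1%:M + \sum_(i <- s) (lam i - 1) *: E i).
    have z : \sum_(i <- s) (lam j - 1) *: E j *m ((lam i - 1) *: E i) = 0.
      rewrite big1_seq // => i /andP[_ si].
      rewrite -scalemxAl -scalemxAr orth ?scaler0 ?scaler0 //.
      by apply: contraNneq js => ->.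
    by rewrite mulmxDl mul1mx mulmxDr mulmx1 mulmx_sumr z addr0 [_ *: E j + _]addrC addrA.
  by rewrite det_mulmx det_idem // addrC subrK.
have := key (enum I) (enum_uniq I); rewrite big_enum /= big_enum /=.
move=> <-; congr determinant.
rewrite -{1}sum1 -big_split /=; apply: eq_bigr => i _.
by rewrite scalerBl scale1r addrC subrK.
Qed.
End LA.
Section Rep.
Variables (gT : finGroupType) (G : {group gT}).
Local Notation aG := (regular_repr algC G).
Local Notation RG := (group_ring algC G).

Definition Zav (x : gT) : 'M[algC]_(gcard G) :=
  #|G|%:R^-1 *: \sum_(y in G) aG (x ^ y)%g.

Lemma Zav_mem x : x \in G -> (Zav x \in RG)%MS.
Proof.
move=> Gx; rewrite /Zav linearZ linear_sum /=; apply: scalemx_sub.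
by apply: summx_sub => y Gy; apply: envelop_mx_id; rewrite groupJ.
Qed.

Lemma Zav_comm_elt x z : x \in G -> z \in G -> Zav x *m aG z = aG z *m Zav x.
Proof.
move=> Gx Gz; rewrite /Zav -scalemxAl -scalemxAr; congr (_ *: _).
rewrite mulmx_suml mulmx_sumr [RHS](reindex_inj (mulIg z)) /=.
apply: eq_big => [y | y Gy]; first by rewrite groupMr.
rewrite -!repr_mxM ?groupJ ?groupM //.
by rewrite conjgM {2}/conjg mulKVg.
Qed.

Lemma Zav_central x B : x \in G -> (B \in RG)%MS -> Zav x *m B = B *m Zav x.
Proof.
move=> Gx /envelop_mxP[b ->]; rewrite mulmx_suml mulmx_sumr.
apply: eq_bigr => z Gz.
by rewrite -(scalemxAl (b z) (aG z)) -(scalemxAr (b z) (Zav x)) Zav_comm_elt.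
Qed.

Local Notation e i := (Wedderburn_id (socle_of_Iirr i)).

Lemma e_memRG (i : Iirr G) : (e i \in RG)%MS.
Proof.
have sRiR : (Wedderburn_subring (socle_of_Iirr i) <= RG)%MS.
  by rewrite -(Wedderburn_sum_pchar (DecSocleType aG) (algC'G_pchar G)) (sumsmx_sup (socle_of_Iirr i)).
exact: (memmx_subP sRiR _ (Wedderburn_id_mem _)).
Qed.

Lemma Ri_sub (i : Iirr G) : (Wedderburn_subring (socle_of_Iirr i) <= RG)%MS.
Proof.
by rewrite -(Wedderburn_sum_pchar (DecSocleType aG) (algC'G_pchar G)) (sumsmx_sup (socle_of_Iirr i)).
Qed.

Lemma Zav_eig (i : Iirr G) x : x \in G ->
  Zav x *m e i = ('chi_i x / 'chi_i 1%g) *: e i.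
Proof.
move=> Gx.
have [_ Rie eA Ae] := Wedderburn_is_id_pchar (algC'G_pchar G) (socle_of_Iirr i).
have ZR := Zav_mem Gx.
have inR : (Zav x *m e i \in Wedderburn_subring (socle_of_Iirr i))%MS.
  have /andP[lid _] := Wedderburn_ideal (socle_of_Iirr i).
  exact: (memmx_subP lid _ (mem_mulsmx ZR Rie)).
have inZ : (Zav x *m e i \in 'Z(Wedderburn_subring (socle_of_Iirr i)))%MS.
  rewrite sub_capmx inR /=; apply/cent_mxP => B RiB.
  have RGB : (B \in RG)%MS := memmx_subP (Ri_sub i) _ RiB.
  by rewrite mulmxA -Zav_central // -mulmxA Ae // -mulmxA eA.
move: inZ; rewrite (Wedderburn_subring_center_pchar (algC'G_pchar G) (@groupC _ G)).
case/sub_rVP => c; rewrite -linearZ => /(can_inj mxvecK) eZ.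
rewrite eZ; congr (_ *: _).
have := congr1 (xcfun 'chi_i) eZ.
rewrite xcfunZr xcfun_id eqxx mulr1n.
rewrite (Zav_central Gx (memmx_subP (Ri_sub i) _ Rie)) xcfun_mul_id //.
rewrite /Zav xcfunZr raddf_sum /=.
rewrite (eq_bigr (fun _ => 'chi_i x)) => [|y Gy]; last by rewrite xcfunG ?groupJ // cfunJ.
rewrite sumr_const -(mulr_natl ('chi_i x)) mulrA mulVf ?mul1r ?pnatr_eq0 -?lt0n ?cardG_gt0 // => ->.
by rewrite mulfK ?irr1_neq0.
Qed.

Lemma e_idem (i : Iirr G) : e i *m e i = e i.
Proof.
have [_ Rie eA _] := Wedderburn_is_id_pchar (algC'G_pchar G) (socle_of_Iirr i).
exact: eA.
Qed.

Lemma e_orth (i j : Iirr G) : i != j -> e i *m e j = 0.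
Proof.
move=> ij; apply: Wedderburn_mulmx0; last 2 first.
- exact: Wedderburn_id_mem.
- exact: Wedderburn_id_mem.
by rewrite (can_eq (@socle_of_IirrK _ G)).
Qed.

Lemma e_sum : \sum_(i : Iirr G) e i = 1%:M.
Proof.
rewrite -(Wedderburn_sum_id_pchar (DecSocleType aG) (algC'G_pchar G)).
by rewrite [RHS](reindex _ (socle_of_Iirr_bij _)).
Qed.

Lemma e_memRG' (i : Iirr G) : (e i \in RG)%MS.
Proof. exact: (memmx_subP (Ri_sub i) _ (Wedderburn_id_mem _)). Qed.

Lemma e_tr (i : Iirr G) : \tr (e i) = 'chi_i 1%g ^+ 2.
Proof.
rewrite -(gring_op_id (e_memRG' i)) -xcfun_repr cfReprReg cfReg_sum -xcfun_rE raddf_sum.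
rewrite (bigD1 i) //= big1 ?addr0 => [|j ji]; rewrite xcfunZl xcfun_id.
  by rewrite eqxx mulr1n expr2.
by rewrite (negPf ji) mulr0n mulr0.
Qed.

Lemma e_rank (i : Iirr G) : \rank (e i) = (Num.truncn ('chi_i 1%g) ^ 2)%N.
Proof.
have := tr_idem (e_idem i); rewrite e_tr irr1_degree natrK -natrX => /eqP.
by rewrite eq_sym eqr_nat => /eqP.
Qed.
End Rep.
Definition phi : {rmorphism algC -> ratF} := (@FracField.tofrac _ \o polyC)%FUN.

Definition fS (gT : finGroupType) (S : {set gT}) (beta : gT -> int) (x : gT) : ratF :=
  #|S|%:R * (x == 1%g)%:R - (x \in S)%:R * onePT (beta x).

Lemma iwT (gT : finGroupType) (G : {group gT}) S beta :
  (forall x y, y \in G -> fS S beta (x ^ y)%g = fS S beta x) ->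
  (iw_matrix G S beta)^T = \sum_(x in G) fS S beta x *: map_mx phi (regular_repr algC G x).
Proof.
move=> hJ; apply/matrixP => i j; rewrite !mxE summxE.
have Gi : gelt i \in G by apply: enum_valP.
have Gj : gelt j \in G by apply: enum_valP.
pose x0 := ((gelt i)^-1 * gelt j)%g.
have Gx0 : x0 \in G by rewrite groupM ?groupV.
rewrite (bigD1 x0) //= big1 ?addr0 => [|x /andP[Gx nx]]; last first.
  rewrite !mxE /=.
  case: eqP => [e|_]; last by rewrite polyC0 rmorph0 mulr0.
  case/negP: nx; apply/eqP.
  have : gelt j = (enum_val i * x)%g.
    by rewrite /gelt e gring_indexK // groupM // enum_valP.
  by move=> ej; rewrite /x0 ej mulKg.
rewrite !mxE /=.
have -> : gring_index G (enum_val i * x0) = j.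
  by rewrite /x0 /gelt mulKVg gring_valK.
rewrite eqxx.
have -> : x0 = ((gelt j * (gelt i)^-1) ^ gelt i)%g.
  by rewrite /x0 conjgE -(mulgA (gelt j)) mulVg mulg1.
rewrite hJ // /fS -eq_mulgV1 (inj_eq enum_val_inj).
by rewrite polyC1 rmorph1 mulr1.
Qed.

Lemma avg (gT : finGroupType) (G : {group gT}) (g : gT -> ratF) :
  (forall x y, y \in G -> g (x ^ y)%g = g x) ->
  \sum_(x in G) g x *: map_mx phi (regular_repr algC G x)
  = \sum_(x in G) g x *: map_mx phi (Zav G x).
Proof.
move=> hJ.
pose B x := map_mx phi (regular_repr algC G x).
have inner y : y \in G -> \sum_(x in G) g x *: B (x ^ y)%g = \sum_(x in G) g x *: B x.
  move=> Gy; rewrite [RHS](reindex_inj (conjg_inj y)) /=.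
  apply: eq_big => [x|x Gx]; first by rewrite groupJr.
  by rewrite hJ.
transitivity (phi (#|G|%:R^-1) *: \sum_(x in G) \sum_(y in G) g x *: B (x ^ y)%g); last first.
  rewrite scaler_sumr; apply: eq_bigr => x Gx.
  rewrite /Zav map_mxZ (raddf_sum (map_mx phi)) scalerA mulrC -scalerA.
  by congr (_ *: _); rewrite scaler_sumr.
have hc : phi (#|G|%:R^-1) * #|G|%:R = 1.
  by rewrite -(rmorph_nat phi) -(rmorphM phi) mulVf ?rmorph1 // pnatr_eq0 -lt0n cardG_gt0.
by rewrite exchange_big /= (eq_bigr _ inner) sumr_const -scaler_nat scalerA hc scale1r.
Qed.

Lemma phiE c : cstF c = phi c. Proof. by []. Qed.

Lemma lamE (gT : finGroupType) (G : {group gT}) (S : {set gT}) beta (i : Iirr G) :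
  S \subset G ->
  \sum_(x in G) fS S beta x * phi ('chi_i x / 'chi_i 1%g) = @Pchi gT G S beta i.
Proof.
move=> sSG; rewrite /Pchi /Qchi !phiE.
under eq_bigr do rewrite fmorph_div mulrA.
rewrite -mulr_suml; congr (_ / _).
under eq_bigr do rewrite /fS mulrBl.
rewrite sumrB (bigD1 1%g) //= big1 ?addr0 => [|x /andP[_ /negPf ->]]; last by rewrite mulr0 mul0r.
rewrite eqxx mulr1; congr (_ - _).
under [in RHS]eq_bigr do rewrite phiE.
rewrite [RHS]big_mkcond [LHS]big_mkcond /=; apply: eq_bigr => x _.
case Sx: (x \in S); case Gx: (x \in G); rewrite ?mul1r ?mul0r //.
by rewrite (subsetP sSG _ Sx) in Gx.
Qed.

Unset Implicit Arguments.
Set Strict Implicit.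
Set Printing Implicit Defensive.

Theorem theorem3p2 (gT : finGroupType) (G : {group gT}) (S : {set gT})
  (l : nat) (beta : gT -> int) :
  S \subset G ->
  (forall g, g \in G -> (S :^ g)%g = S) ->
  <<S>>%g = G ->
  (S^-1)%g = S ->
  (1%g \notin S) ->
  @cay_euler_char gT G S != 0 ->
  prime l ->
  (forall g a, g \in G -> a \in S -> beta (a ^ g)%g = beta a) ->
  (exists2 s, s \in S & ~~ (l%:Z %| beta s)%Z) ->
  (forall s, s \in S -> beta (s^-1)%g = - beta s) ->
  (exists m : nat, exists h : 'I_m -> gT,
      [/\ (0 < m)%N, (forall k, h k \in S), (\prod_(k < m) h k)%g \in S &
          (beta (\prod_(k < m) h k)%g != \sum_(k < m) beta (h k) %[mod l%:Z])%Z]) ->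
  @iwasawa_f gT G S beta =
    \prod_(i : Iirr G) @Pchi gT G S beta i ^+ ((Num.truncn ('chi_i 1%g)) ^ 2)%N.
Proof.
move=> sSG hS _ _ _ _ _ hb _ _ _.
have hJ : forall x y, y \in G -> fS S beta (x ^ y)%g = fS S beta x.
  move=> x y Gy; rewrite /fS conjg_eq1.
  have eS : (x ^ y \in S)%g = (x \in S) by rewrite -{1}(hS y Gy) memJ_conjg.
  rewrite eS; case Sx: (x \in S); last by rewrite !mul0r.
  by rewrite hb.
set M := iw_matrix G S beta.
pose E (i : Iirr G) := map_mx phi (Wedderburn_id (socle_of_Iirr i)).
pose lam (i : Iirr G) := \sum_(x in G) fS S beta x * phi ('chi_i x / 'chi_i 1%g).
have hT : M^T = \sum_(x in G) fS S beta x *: map_mx phi (Zav G x) by rewrite iwT // avg.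
have hE i : M^T *m E i = lam i *: E i.
  rewrite hT mulmx_suml /lam scaler_suml; apply: eq_bigr => x Gx.
  by rewrite -scalemxAl -map_mxM Zav_eig // map_mxZ scalerA.
have hES : \sum_i E i = 1%:M.
  rewrite /E -(raddf_sum (map_mx phi)) e_sum.
  by apply/matrixP => a b; rewrite !mxE; case: (a == b); rewrite ?rmorph1 ?rmorph0.
have hsum : M^T = \sum_i lam i *: E i.
  rewrite -[M^T]mulmx1 -hES mulmx_sumr.
  by apply: eq_bigr => i _; apply: hE.
rewrite /iwasawa_f -det_tr -/M hsum det_idems.
- apply: eq_bigr => i _; rewrite mxrank_map e_rank; congr (_ ^+ _).
  exact: lamE.
- by move=> i; rewrite /E -map_mxM e_idem.
- by move=> i j ij; rewrite /E -map_mxM e_orth ?map_mx0.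
- exact: hES.
Qed.
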